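(* Let $\mathbb{I}=\{0,\dots,N-1\}$ with the linear adjacency ($i$ adjacent to $i+1$ for $0\le i\le N-2$), let $L$ be a finite totally ordered set and let $x:\mathbb{I}\to L$ be surjective. For $l\in L$, two connected components merge together at level $l$ in the sublevel set filtration (i.e. there exist two distinct connected components of $L_{<l}$ that are contained in the same connected component of $L_{<l}\cup L_l$) if and only if $l$ is the level of a local (flat) maximum $x[m],x[m+1],\dots,x[n]$ with $m\neq 0$ and $n\neq N-1$, i.e. there exist $1\le m\le n\le N-2$ with $x[m]=\dots=x[n]=l$, $x[m-1]<l$ and $x[n+1]<l$.
   Context: $L_l=\{i:x[i]=l\}$, $L_{<l}=\{i:x[i]<l\}$. A subset $S\subseteq\mathbb{I}$ is connected if it is nonempty and any two of its elements are joined by a chain of elements of $S$ with consecutive elements adjacent; connected components are maximal connected subsets. A local (flat) maximum at level $l$ is a maximal run of consecutive indices with value $l$ whose existing outer neighbours all have value strictly less than $l$. *)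

(* Defs.v *)
From mathcomp Require Import all_boot all_order.
Set Implicit Arguments. Unset Strict Implicit. Unset Printing Implicit Defensive.
Import Order.TTheory.
Local Open Scope order_scope.

Definition adj (N : nat) : rel 'I_N :=
  fun i j => ((nat_of_ord i).+1 == j) || ((nat_of_ord j).+1 == i).

Definition connected_set (N : nat) (S : {set 'I_N}) : Prop :=
  S != set0 /\
  forall a b, a \in S -> b \in S ->
    exists p : seq 'I_N, [/\ path (@adj N) a p, last a p = b & all (mem S) p].

Definition component (N : nat) (A C : {set 'I_N}) : Prop :=
  [/\ C \subset A, connected_set C &
      forall D : {set 'I_N}, C \subset D -> D \subset A -> connected_set D -> D = C].

Definition level_set (N : nat) (d : Order.disp_t) (L : orderType d)
  (x : 'I_N -> L) (l : L) : {set 'I_N} := [set i | x i == l].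
Definition sublevel_lt (N : nat) (d : Order.disp_t) (L : orderType d)
  (x : 'I_N -> L) (l : L) : {set 'I_N} := [set i | x i < l].

Definition merge_at (N : nat) (d : Order.disp_t) (L : orderType d)
  (x : 'I_N -> L) (l : L) : Prop :=
  exists C1 C2 D : {set 'I_N},
    [/\ component (sublevel_lt x l) C1, component (sublevel_lt x l) C2, C1 != C2,
        component (sublevel_lt x l :|: level_set x l) D &
        C1 \subset D /\ C2 \subset D].

(* Main.v *)
Require Import Defs.
From mathcomp Require Import all_boot all_order zify.
Set Warnings "-notation-overridden".
Import Order.TTheory.
Set Implicit Arguments. Unset Strict Implicit.

Definition interval N (S : {set 'I_N}) :=
  forall a b c : 'I_N, a \in S -> b \in S -> (a <= c <= b)%N -> c \in S.

Lemma path_between N (a : 'I_N) p (c : 'I_N) :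
  path (@adj N) a p ->
  ((a <= c <= last a p)%N || (last a p <= c <= a)%N) -> c \in a :: p.
Proof.
elim: p a => [|y p IH] a /=.
  move=> _ H; rewrite inE; apply/eqP; apply: ord_inj; lia.
move/andP=> [Hay Hp] H.
case: (eqVneq c a) => [->|Hca]; first by rewrite inE eqxx.
rewrite inE; apply/orP; right; apply: IH => //.
move: Hay H; rewrite /adj => Hay H.
have : (nat_of_ord c != nat_of_ord a) by [].
move: Hay H; move: (last y p) => z; lia.
Qed.

Lemma conn_interval N (S : {set 'I_N}) : connected_set S -> interval S.
Proof.
move=> [_ H] a b c Ha Hb Hc.
have [p [Hp Hl Hall]] := H a b Ha Hb.
have := @path_between N a p c Hp.
rewrite Hl Hc => /(_ isT).
rewrite inE => /orP [/eqP -> //|]. by move/(allP Hall).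
Qed.

Lemma interval_conn N (S : {set 'I_N}) : S != set0 -> interval S -> connected_set S.
Proof.
move=> Hne HI; split=> // a b Ha Hb.
move: {2}(nat_of_ord a - nat_of_ord b + (nat_of_ord b - nat_of_ord a))%N (erefl (nat_of_ord a - nat_of_ord b + (nat_of_ord b - nat_of_ord a))%N) => k.
elim: k a Ha => [|k IH] a Ha Hk.
  exists [::]; split=> //=; apply: ord_inj; move: Hk; lia.
have Hab : (a < b)%N \/ (b < a)%N by lia.
case: Hab => Hab.
  have Hy : (a.+1 < N)%N by have := ltn_ord b; lia.
  set y := Ordinal Hy.
  have Hys : y \in S by apply: (HI a b) => //=; lia.
  have [p [Hp Hl Hall]] := IH y Hys ltac:(move: Hk => /=; lia).
  exists (y :: p); split=> //=; last by rewrite Hys.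
  by rewrite Hp /adj /= eqxx.
have Hy : (a.-1 < N)%N by have := ltn_ord a; lia.
set y := Ordinal Hy.
have Hys : y \in S by apply: (HI b a) => //=; lia.
have [p [Hp Hl Hall]] := IH y Hys ltac:(move: Hk => /=; lia).
exists (y :: p); split=> //=; last by rewrite Hys.
rewrite Hp /adj /= andbT; apply/orP; right; apply/eqP; lia.
Qed.

Lemma union_conn N (S T : {set 'I_N}) z : connected_set S -> connected_set T ->
  z \in S -> z \in T -> connected_set (S :|: T).
Proof.
move=> HS HT zS zT; have IS := conn_interval HS; have IT := conn_interval HT.
apply: interval_conn.
  by apply/set0Pn; exists z; rewrite inE zS.
move=> a b c; rewrite !inE => /orP [aS|aT] /orP [bS|bT] Hc.
- by rewrite (IS a b c).
- case: (leqP c z) => Hcz.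
    by rewrite (IS a z c) //; lia.
  by rewrite (IT z b c) ?orbT //; lia.
- case: (leqP c z) => Hcz.
    by rewrite (IT a z c) ?orbT //; lia.
  by rewrite (IS z b c) //; lia.
- by rewrite (IT a b c) ?orbT.
Qed.

Lemma comp_absorb N (A C T : {set 'I_N}) z : component A C -> connected_set T ->
  T \subset A -> z \in C -> z \in T -> T \subset C.
Proof.
move=> [CA HC Hmax] HT TA zC zT.
have := Hmax (C :|: T) (subsetUl _ _) ltac:(by rewrite subUset CA TA)
   (union_conn HC HT zC zT).
by move=> <-; apply: subsetUr.
Qed.

Lemma comp_eq N (A C1 C2 : {set 'I_N}) z : component A C1 -> component A C2 ->
  z \in C1 -> z \in C2 -> C1 = C2.
Proof.
move=> H1 H2 z1 z2.
have H2' := H2; case: H2' => C2A HC2 _.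
have s21 := comp_absorb H1 HC2 C2A z1 z2.
case: H1 => C1A HC1 _.
have s12 := comp_absorb H2 HC1 C1A z2 z1.
by apply/eqP; rewrite eqEsubset s12 s21.
Qed.

Definition compo N (A : {set 'I_N}) (i : 'I_N) : {set 'I_N} :=
  [set j : 'I_N | [forall k : 'I_N, ((i <= k <= j)%N || (j <= k <= i)%N) ==> (k \in A)]].

Lemma compo_in N (A : {set 'I_N}) (i j k : 'I_N) : j \in compo A i ->
  ((i <= k <= j)%N || (j <= k <= i)%N) -> k \in A.
Proof. by rewrite inE => /forallP /(_ k) /implyP. Qed.

Lemma compo_self N (A : {set 'I_N}) i : i \in A -> i \in compo A i.
Proof.
move=> iA; rewrite inE; apply/forallP => k; apply/implyP => H.
by have -> : k = i by apply: ord_inj; lia.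
Qed.

Lemma compo_comp N (A : {set 'I_N}) i : i \in A -> component A (compo A i).
Proof.
move=> iA; have iC := compo_self iA.
have HC : connected_set (compo A i).
  apply: interval_conn; first by apply/set0Pn; exists i.
  move=> a b c aC bC Hc; rewrite inE; apply/forallP => k; apply/implyP => Hk.
  case: (leqP i c) => Hic.
    by apply: (compo_in bC); lia.
  by apply: (compo_in aC); lia.
split=> //.
  apply/subsetP => j jC; apply: (compo_in jC); lia.
move=> D CD DA HD; apply/eqP; rewrite eqEsubset CD andbT.
apply/subsetP => j jD; rewrite inE; apply/forallP => k; apply/implyP => Hk.
have iD : i \in D by apply: (subsetP CD).
have ID := conn_interval HD.
apply: (subsetP DA).
case/orP: Hk => Hk; [exact: (ID i j k) | exact: (ID j i k)].
Qed.

Local Open Scope order_scope.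

Lemma back (N : nat) (d : Order.disp_t) (L : finOrderType d)
  (x : 'I_N -> L) (l : L) :
  (exists m n : nat, [/\ (1 <= m)%N /\ (m <= n)%N /\ (n.+2 <= N)%N,
    (forall i : 'I_N, (m <= i <= n)%N -> x i = l),
    (forall i : 'I_N, nat_of_ord i = m.-1 -> x i < l) &
    (forall i : 'I_N, nat_of_ord i = n.+1 -> x i < l)]) -> merge_at x l.
Proof.
move=> [m [n [[H1 [H2 H3]] Hmid Hl Hr]]].
have Ha : (m.-1 < N)%N by lia.
have Hb : (n.+1 < N)%N by lia.
have Hm : (m < N)%N by lia.
set a := Ordinal Ha; set b := Ordinal Hb; set cm := Ordinal Hm.
set A := sublevel_lt x l; set B := A :|: level_set x l.
have aA : a \in A by rewrite inE; apply: Hl.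
have bA : b \in A by rewrite inE; apply: Hr.
have AB : A \subset B by apply: subsetUl.
have aB : a \in B by apply: (subsetP AB).
exists (compo A a), (compo A b), (compo B a); split.
- exact: compo_comp.
- exact: compo_comp.
- apply/eqP => E.
  have bC : b \in compo A a by rewrite E compo_self.
  have := compo_in (k:=cm) bC; rewrite inE Hmid /=; last by lia.
  by rewrite ltxx; move/(_ ltac:(lia)).
- exact: compo_comp.
have bD : b \in compo B a.
  rewrite inE; apply/forallP => k; apply/implyP => Hk.
  rewrite !inE.
  case: (eqVneq (nat_of_ord k) m.-1) => [/Hl -> //|Hk1].
  case: (eqVneq (nat_of_ord k) n.+1) => [/Hr -> //|Hk2].
  by rewrite Hmid ?eqxx ?orbT //; move: Hk Hk1 Hk2 => /=; lia.
case: (compo_comp aA) => CA CC _.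
case: (compo_comp bA) => CA' CC' _.
split.
  apply: (comp_absorb (compo_comp aB) CC (subset_trans CA AB) (z:=a));
  exact: compo_self.
apply: (comp_absorb (compo_comp aB) CC' (subset_trans CA' AB) (z:=b)) => //.
exact: compo_self.
Qed.

Lemma fwd_core (N : nat) (d : Order.disp_t) (L : finOrderType d)
  (x : 'I_N -> L) (l : L) (C1 C2 D : {set 'I_N}) (a b : 'I_N) :
  component (sublevel_lt x l) C1 -> component (sublevel_lt x l) C2 -> C1 != C2 ->
  component (sublevel_lt x l :|: level_set x l) D ->
  C1 \subset D -> C2 \subset D -> a \in C1 -> b \in C2 -> (a < b)%N ->
  exists m n : nat, [/\ (1 <= m)%N /\ (m <= n)%N /\ (n.+2 <= N)%N,
    (forall i : 'I_N, (m <= i <= n)%N -> x i = l),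
    (forall i : 'I_N, nat_of_ord i = m.-1 -> x i < l) &
    (forall i : 'I_N, nat_of_ord i = n.+1 -> x i < l)].
Proof.
move=> H1 H2 Hne HD S1 S2 aC1 bC2 Hab.
set A := sublevel_lt x l.
have aA : x a < l.
  by case: H1 => /subsetP CA _ _; move: (CA a aC1); rewrite inE.
have bA : x b < l.
  by case: H2 => /subsetP CA _ _; move: (CA b bC2); rewrite inE.
have aD : a \in D by apply: (subsetP S1).
have bD : b \in D by apply: (subsetP S2).
case: (HD) => /subsetP DB HDc _.
have ID := conn_interval HDc.
have [c Hc] : exists c : 'I_N, ((a <= c <= b)%N && ~~ (x c < l)).
  case: (boolP [exists c : 'I_N, ((a <= c <= b)%N && ~~ (x c < l))]).
    by move/existsP.
  move=> /existsPn Hall; exfalso.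
  set T := [set k : 'I_N | (a <= k <= b)%N].
  have aT : a \in T by rewrite inE leqnn /=; lia.
  have bT : b \in T by rewrite inE leqnn andbT; lia.
  have HT : connected_set T.
    apply: interval_conn; first by apply/set0Pn; exists a.
    move=> u v w; rewrite !inE => Hu Hv Hw; lia.
  have TA : T \subset A.
    apply/subsetP => k; rewrite !inE => Hk.
    by move: (Hall k); rewrite Hk /= negbK.
  have := comp_absorb H1 HT TA aC1 aT => /subsetP /(_ b bT) bC1.
  by move: Hne; rewrite (comp_eq H1 H2 bC1 bC2) eqxx.
move/andP: Hc => [Hc Hxc].
have Pa : (a <= c)%N && (x a < l) by rewrite aA andbT; lia.
case: (@arg_maxnP _ a (fun k : 'I_N => (k <= c)%N && (x k < l)) (fun k : 'I_N => nat_of_ord k) Pa) => k1 /andP [Hk1c Hk1] Hmax.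
have Pb : (c <= b)%N && (x b < l) by rewrite bA andbT; lia.
case: (@arg_minnP _ b (fun k : 'I_N => (c <= k)%N && (x k < l)) (fun k : 'I_N => nat_of_ord k) Pb) => k2 /andP [Hk2c Hk2] Hmin.
have ak1 : (a <= k1)%N by exact: (Hmax a Pa).
have k2b : (k2 <= b)%N by exact: (Hmin b Pb).
have Hck1 : nat_of_ord k1 != nat_of_ord c.
  by apply/negP => /eqP /ord_inj E; move: Hxc; rewrite -E Hk1.
have Hck2 : nat_of_ord k2 != nat_of_ord c.
  by apply/negP => /eqP /ord_inj E; move: Hxc; rewrite -E Hk2.
exists k1.+1, k2.-1; split.
- have := ltn_ord k2; move: Hk1c Hk2c Hck1 Hck2.
  move: (nat_of_ord k1) (nat_of_ord k2) (nat_of_ord c) => u v w; clear; lia.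
- move=> i Hi.
  have iD : i \in D.
    apply: (ID a b i) => //; move: ak1 k2b Hi.
    move: (nat_of_ord a) (nat_of_ord b) (nat_of_ord i) (nat_of_ord k1) (nat_of_ord k2).
    clear; lia.
  move: (DB i iD); rewrite !inE => /orP [Hi'|/eqP //].
  exfalso; case: (leqP i c) => Hic.
    have : (i <= k1)%N by apply: (Hmax i); rewrite /= Hic Hi'.
    move: Hi; move: (nat_of_ord i) (nat_of_ord k1) (nat_of_ord k2); clear; lia.
  have : (k2 <= i)%N by apply: (Hmin i); rewrite /= Hi' andbT ltnW.
  move: Hi; move: (nat_of_ord i) (nat_of_ord k1) (nat_of_ord k2); clear; lia.
- by move=> i /= Hi; have -> : i = k1 by apply: ord_inj.
- move=> i Hi; have -> : i = k2.
    apply: ord_inj; move: Hi Hk2c Hck2; move: (nat_of_ord i) (nat_of_ord k2) (nat_of_ord c).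
    clear; lia.
  done.
Qed.

Unset Implicit Arguments. Set Strict Implicit.
Theorem mainTheorem5 (N : nat) (d : Order.disp_t) (L : finOrderType d)
  (x : 'I_N -> L) (Hsurj : forall l : L, exists i, x i = l) (l : L) :
  merge_at x l <->
  exists m n : nat, [/\ (1 <= m)%N /\ (m <= n)%N /\ (n.+2 <= N)%N,
    (forall i : 'I_N, (m <= i <= n)%N -> x i = l),
    (forall i : 'I_N, nat_of_ord i = m.-1 -> x i < l) &
    (forall i : 'I_N, nat_of_ord i = n.+1 -> x i < l)].
Proof.
split; last exact: back.
move=> [C1 [C2 [D [H1 H2 Hne HD [S1 S2]]]]].
have [a aC1] : exists a, a \in C1 by case: H1 => _ [/set0Pn ? _] _.
have [b bC2] : exists b, b \in C2 by case: H2 => _ [/set0Pn ? _] _.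
case: (ltngtP a b) => Hab.
- exact: (fwd_core H1 H2 Hne HD S1 S2 aC1 bC2 Hab).
- by apply: (fwd_core H2 H1 _ HD S2 S1 bC2 aC1 Hab); rewrite eq_sym.
- have E : a = b by apply: ord_inj.
  rewrite -E in bC2.
  by move: Hne; rewrite (comp_eq H1 H2 aC1 bC2) eqxx.
Qed.
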